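(* Let $A$ be a differential ring and $X=\operatorname{Spec}^\Delta A$. For every $\eta\in\mathcal O'(X)$ there exist $b_1,\ldots,b_m\in A$ such that $\iota'(b_i)\eta\in\iota'(A)$ for all $i$ and $\{b_1,\ldots,b_m\}=A$.
   Context: All rings are commutative with unit. A differential ring is a ring with finitely many pairwise commuting derivations. $X=\operatorname{Spec}^\Delta A$ is the set of prime ideals of $A$ closed under all derivations, with the Kolchin topology (closed sets $V(E)=\{\mathfrak p\in X: E\subseteq\mathfrak p\}$, $E\subseteq A$); for $s\in A$, $X_s=\{\mathfrak p\in X: s\notin\mathfrak p\}$. For $E\subseteq A$, $\{E\}$ is the smallest radical differential ideal containing $E$. For $\mathfrak p\in X$, $K(\mathfrak p)$ is the fraction field of $A/\mathfrak p$ with the induced derivations. For an open $U\subseteq X$, $\mathcal O'(U)$ is the set of functions $f$ on $U$ with $f(\mathfrak p)\in K(\mathfrak p)$ that are regular at every point of $U$, where $f$ is regular at $\mathfrak p$ if there exist an open neighborhood $W\subseteq U$ of $\mathfrak p$ and $a,b\in A$ with $b\notin\mathfrak q$ and $f(\mathfrak q)=a/b$ in $K(\mathfrak q)$ for all $\mathfrak q\in W$. With pointwise operations and pointwise derivations, $\mathcal O'(U)$ is a differential ring. The differential homomorphism $\iota'\colon A\to\mathcal O'(X)$ sends $a$ to the function $\mathfrak p\mapsto (a \bmod \mathfrak p)\in K(\mathfrak p)$. *)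

(* Defs.v *)
From HB Require Import structures.
From mathcomp Require Import all_boot all_algebra.
Set Implicit Arguments. Unset Strict Implicit. Unset Printing Implicit Defensive.
Import GRing.Theory.
Local Open Scope ring_scope.

Definition is_derivation (A : comPzRingType) (d : A -> A) : Prop :=
  (forall x y, d (x + y) = d x + d y) /\ (forall x y, d (x * y) = d x * y + x * d y).

Definition is_diff_ring (A : comPzRingType) (n : nat) (D : 'I_n -> A -> A) : Prop :=
  (forall i, is_derivation (D i)) /\ (forall i j x, D i (D j x) = D j (D i x)).

Definition is_ideal (A : comPzRingType) (I : A -> Prop) : Prop :=
  I 0 /\ (forall x y, I x -> I y -> I (x + y)) /\ (forall a x, I x -> I (a * x)).

Definition is_radical (A : comPzRingType) (I : A -> Prop) : Prop :=
  forall (x : A) (k : nat), I (x ^+ k) -> I x.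

Definition is_diff_closed (A : comPzRingType) (n : nat) (D : 'I_n -> A -> A)
  (I : A -> Prop) : Prop := forall i x, I x -> I (D i x).

Definition is_prime_ideal (A : comPzRingType) (P : A -> Prop) : Prop :=
  is_ideal P /\ ~ P 1 /\ (forall x y, P (x * y) -> P x \/ P y).

Definition diff_prime (A : comPzRingType) (n : nat) (D : 'I_n -> A -> A)
  (P : A -> Prop) : Prop := is_prime_ideal P /\ is_diff_closed D P.

Definition rad_diff_closure (A : comPzRingType) (n : nat) (D : 'I_n -> A -> A)
  (E : A -> Prop) (x : A) : Prop :=
  forall I : A -> Prop, is_ideal I -> is_radical I -> is_diff_closed D I ->
    (forall y, E y -> I y) -> I x.

(* Elements of K(p) = Frac(A/p) are represented by pairs (a, b) of A with b \notin p,
   standing for (a mod p)/(b mod p); two such pairs are equal in K(p) iff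
   a * d - c * b \in p. *)
Definition frac_eq (A : comPzRingType) (p : A -> Prop) (u v : A * A) : Prop :=
  p (u.1 * v.2 - v.1 * u.2).

(* q lies in the basic Kolchin open set X \ V(E) *)
Definition in_open (A : comPzRingType) (E : A -> Prop) (q : A -> Prop) : Prop :=
  ~ (forall y, E y -> q y).

(* eta : X -> (K(q))_q, given by representatives, is regular at p (U = X) *)
Definition regular_at (A : comPzRingType) (n : nat) (D : 'I_n -> A -> A)
  (eta : (A -> Prop) -> A * A) (p : A -> Prop) : Prop :=
  exists (E : A -> Prop) (a b : A), in_open E p /\
    forall q, diff_prime D q -> in_open E q -> ~ q b /\ frac_eq q (eta q) (a, b).

Definition in_Oprime_X (A : comPzRingType) (n : nat) (D : 'I_n -> A -> A)
  (eta : (A -> Prop) -> A * A) : Prop :=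
  (forall p, diff_prime D p -> ~ p (eta p).2) /\
  (forall p, diff_prime D p -> regular_at D eta p).

(* Main.v *)
Require Import Defs.
From HB Require Import structures.
From mathcomp Require Import all_boot all_algebra.
From Stdlib Require Import Classical ClassicalEpsilon FunctionalExtensionality PropExtensionality.
Set Implicit Arguments. Unset Strict Implicit.
Import GRing.Theory.
Local Open Scope ring_scope.

Definition sub (T : Type) (X Y : T -> Prop) := forall a, X a -> Y a.
Definition strict (T : Type) (X Y : T -> Prop) := sub X Y /\ ~ sub Y X.

Lemma set_ext (T : Type) (X Y : T -> Prop) : sub X Y -> sub Y X -> X = Y.
Proof.
move=> h1 h2; apply: functional_extensionality => a.
apply: propositional_extensionality; split; [exact: h1|exact: h2].
Qed.

Inductive tower (T : Type) (f : (T -> Prop) -> (T -> Prop)) (b : T -> Prop) :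
  (T -> Prop) -> Prop :=
| tw_f J : tower f b J -> tower f b (f J)
| tw_u (C : (T -> Prop) -> Prop) : (forall J, C J -> tower f b J) ->
    tower f b (fun a => b a \/ exists J, C J /\ J a).

Lemma tower_base T f b J : @tower T f b J -> (forall K, sub K (f K)) -> sub b J.
Proof.
move=> h hi; elim: h => [K _ IH | C _ _] a ha.
- exact: hi (IH a ha).
- by left.
Qed.

Definition pivot T f b (c : T -> Prop) :=
  forall x, @tower T f b x -> strict x c -> sub (f x) c.

Lemma lemma1 T f b (hi : forall K, sub K (f K)) c : @tower T f b c -> pivot f b c ->
  forall x, tower f b x -> sub x c \/ sub (f c) x.
Proof.
move=> tc pc x tx; elim: tx => [K tK IH | C hC IH].
- case: IH => h.
  + case: (classic (sub c K)) => h2.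
    * right; rewrite (set_ext h h2) => a; exact.
    * left; apply: pc => //; split => //.
  + right => a ha; exact: hi (h a ha).
- case: (classic (exists J, C J /\ sub (f c) J)) => [[J [CJ hJ]]|hn].
  + right => a ha; right; exists J; split => //; exact: hJ.
  + left => a [ha | [J [CJ hJ]]].
    * exact: tower_base tc hi a ha.
    * case: (IH J CJ) => h; first exact: h.
      by exfalso; apply: hn; exists J.
Qed.

Lemma lemma2 T f b (hi : forall K, sub K (f K)) c : @tower T f b c -> pivot f b c.
Proof.
elim => [c0 tc IH | C hC IH].
- move=> x tx [hs hns].
  case: (lemma1 hi tc IH tx) => h.
  + case: (classic (sub c0 x)) => h2.
    * rewrite (set_ext h h2) => a; exact.
    * move=> a ha; apply: hi; apply: (IH x tx) => //; split => //.
  + by exfalso; apply: hns.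
- move=> x tx [hs hns].
  case: (classic (exists J, C J /\ ~ sub J x)) => [[J [CJ hJ]]|hn].
  + case: (lemma1 hi (hC J CJ) (IH J CJ) tx) => h.
    * move=> a ha; right; exists J; split => //.
      apply: (IH J CJ x tx) => //; split => //.
    * by exfalso; apply: hJ => a ha; apply: h; apply: hi.
  + exfalso; apply: hns => a [ha | [J [CJ hJ]]].
    * exact: tower_base tx hi a ha.
    * apply: NNPP => hna; apply: hn; exists J; split => // hs2; exact: hna (hs2 a hJ).
Qed.

Lemma tower_chain T f b (hi : forall K, sub K (f K)) x y :
  @tower T f b x -> tower f b y -> sub x y \/ sub y x.
Proof.
move=> tx ty; case: (lemma1 hi ty (lemma2 hi ty) tx) => h; [by left|].
right => a ha; apply: h; exact: hi.
Qed.

Lemma zorn_gen (T : Type) (P : (T -> Prop) -> Prop) (b : T -> Prop) :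
  (forall C, (forall J, C J -> P J) ->
     (forall J1 J2, C J1 -> C J2 -> sub J1 J2 \/ sub J2 J1) ->
     P (fun a => b a \/ exists J, C J /\ J a)) ->
  exists U, P U /\ forall J, P J -> sub U J -> sub J U.
Proof.
move=> hU.
pose spec (J K : T -> Prop) := ((exists K', P K' /\ strict J K') -> P K /\ strict J K) /\
   (~ (exists K', P K' /\ strict J K') -> K = J).
have ex : forall J, exists K, spec J K.
  move=> J; case: (classic (exists K', P K' /\ strict J K')) => h.
  - case: (h) => K' hK'; exists K'; split => // hn; by [].
  - by exists J; split.
pose f J := proj1_sig (constructive_indefinite_description _ (ex J)).
have fs : forall J, spec J (f J) by move=> J; rewrite /f; case: constructive_indefinite_description.
have hi : forall K, sub K (f K).
  move=> K; case: (fs K) => h1 h2; case: (classic (exists K', P K' /\ strict K K')) => h.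
  - by case: (h1 h) => _ [].
  - by rewrite (h2 h) => a.
have tP : forall J, tower f b J -> P J.
  move=> J; elim => [K _ IH | C hC IH].
  - case: (fs K) => h1 h2; case: (classic (exists K', P K' /\ strict K K')) => h.
    + by case: (h1 h).
    + by rewrite (h2 h).
  - apply: hU => // J1 J2 c1 c2; exact: (@tower_chain T f b hi J1 J2 (hC _ c1) (hC _ c2)).
pose U := fun a => b a \/ exists J, tower f b J /\ J a.
have tU : tower f b U by apply: tw_u.
exists U; split; first exact: tP.
move=> J PJ hUJ; apply: NNPP => hn.
have h : exists K', P K' /\ strict U K' by exists J; split => //.
case: ((fs U).1 h) => _ [_ hns]; apply: hns => a ha; right; exists (f U); split => //.
exact: tw_f.
Qed.

Lemma ideal_mulr (A : comPzRingType) (I : A -> Prop) x a : is_ideal I -> I x -> I (x * a).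
Proof. by move=> [_ [_ hm]] hx; rewrite mulrC; apply: hm. Qed.

Lemma ideal_sub (A : comPzRingType) (I : A -> Prop) x y : is_ideal I -> I x -> I y -> I (x - y).
Proof.
move=> [h0 [hs hm]] hx hy; apply: hs => //; rewrite -mulN1r; exact: hm.
Qed.

Lemma rdc_ideal (A : comPzRingType) n (D : 'I_n -> A -> A) E : is_ideal (rad_diff_closure D E).
Proof.
split; [|split].
- by move=> I [h0 _] _ _ _.
- move=> x y hx hy I hI hr hd hE; case: (hI) => _ [hs _]; apply: hs; [exact: hx|exact: hy].
- move=> a x hx I hI hr hd hE; case: (hI) => _ [_ hm]; apply: hm; exact: hx.
Qed.

Lemma rdc_rad (A : comPzRingType) n (D : 'I_n -> A -> A) E : is_radical (rad_diff_closure D E).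
Proof. move=> x k hx I hI hr hd hE; apply: (hr x k); exact: hx. Qed.

Lemma rdc_diff (A : comPzRingType) n (D : 'I_n -> A -> A) E : is_diff_closed D (rad_diff_closure D E).
Proof. move=> i x hx I hI hr hd hE; apply: (hd i); exact: (hx I hI hr hd hE). Qed.

Lemma rdc_incl (A : comPzRingType) n (D : 'I_n -> A -> A) (E : A -> Prop) y :
  E y -> rad_diff_closure D E y.
Proof. move=> hy I _ _ _ hE; exact: hE. Qed.

Lemma colon_rdi (A : comPzRingType) n (D : 'I_n -> A -> A) (hD : is_diff_ring D)
  (U : A -> Prop) (a : A) :
  is_ideal U -> is_radical U -> is_diff_closed D U ->
  is_ideal (fun z => U (a * z)) /\ is_radical (fun z => U (a * z)) /\
  is_diff_closed D (fun z => U (a * z)).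
Proof.
move=> hI hr hd; have [h0 [hs hm]] := hI.
split; [split; [|split]|split].
- by rewrite mulr0.
- move=> x y hx hy /=; rewrite mulrDr; exact: hs.
- move=> b x hx /=; rewrite mulrCA; exact: hm.
- move=> x [|k] hx /=.
  + rewrite expr0 mulr1 in hx; rewrite mulrC; exact: hm.
  + apply: (hr _ k.+1); rewrite exprMn exprS -mulrA mulrCA; exact: hm.
- move=> i x hx /=.
  have [hDer _] := hD; have [_ hmul] := hDer i.
  have e : (a * D i x) ^+ 2 = (a * D i x) * D i (a * x) - (a * x) * (D i a * D i x).
    have e2 : a * D i x * (D i a * x) = a * x * (D i a * D i x).
      by rewrite -!mulrA; congr (a * _); rewrite [D i a * x]mulrC mulrCA [D i a * _]mulrC.
    by rewrite hmul mulrDr e2 addrAC subrr add0r expr2.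
  apply: (hr _ 2); rewrite e; apply: ideal_sub => //.
  + apply: hm; exact: hd.
  + exact: ideal_mulr.
Qed.

Definition good (A : comPzRingType) n (D : 'I_n -> A -> A) (I J : A -> Prop) :=
  is_ideal J /\ is_radical J /\ is_diff_closed D J /\ sub I J /\ ~ J 1.

Lemma maximal_prime (A : comPzRingType) n (D : 'I_n -> A -> A) (hD : is_diff_ring D)
  (I U : A -> Prop) : good D I U -> (forall J, good D I J -> sub U J -> sub J U) ->
  diff_prime D U.
Proof.
move=> [hI [hr [hd [hIU hn1]]]] hmax.
split; [split; [exact: hI | split; [exact: hn1|]] | exact: hd].
move=> x y hxy; apply: NNPP => hc; apply: hn1.
have key : forall c, (c = x \/ c = y) ->
    rad_diff_closure D (fun z => U z \/ z = c) 1.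
  move=> c hc2; apply: NNPP => h1.
  have g : good D I (rad_diff_closure D (fun z => U z \/ z = c)).
    split; first exact: rdc_ideal.
    split; first exact: rdc_rad.
    split; first exact: rdc_diff.
    split => // a ha; apply: rdc_incl; left; exact: hIU.
  have := hmax _ g (fun a ha => @rdc_incl A n D (fun z => U z \/ z = c) a (or_introl ha)) c (@rdc_incl A n D (fun z => U z \/ z = c) c (or_intror erefl)).
  by case: hc2 => -> h; apply: hc; [left|right].
have hx : forall w, rad_diff_closure D (fun z => U z \/ z = y) w -> U (x * w).
  move=> w hw; have [h1 [h2 h3]] := colon_rdi hD x hI hr hd.
  apply: (hw (fun z => U (x * z)) h1 h2 h3) => z [hz | ->] //=; rewrite mulrC; exact: ideal_mulr.
have hall : forall w, rad_diff_closure D (fun z => U z \/ z = y) w ->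
    forall z, rad_diff_closure D (fun z => U z \/ z = x) z -> U (w * z).
  move=> w hw z hz; have [h1 [h2 h3]] := colon_rdi hD w hI hr hd.
  apply: (hz (fun z => U (w * z)) h1 h2 h3) => t [ht | ->] /=.
  - rewrite mulrC; exact: ideal_mulr.
  - rewrite mulrC; exact: hx.
have := hall 1 (key y (or_intror erefl)) 1 (key x (or_introl erefl)).
by rewrite mulr1.
Qed.

Lemma good_union (A : comPzRingType) n (D : 'I_n -> A -> A) (I : A -> Prop) :
  good D I I ->
  forall C, (forall J, C J -> good D I J) ->
     (forall J1 J2, C J1 -> C J2 -> sub J1 J2 \/ sub J2 J1) ->
     good D I (fun a => I a \/ exists J, C J /\ J a).
Proof.
move=> gI C gC ch.
pose C' K := K = I \/ C K.
have gC' : forall K, C' K -> good D I K by move=> K [->|h]; [exact: gI|exact: gC].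
have ch' : forall K1 K2, C' K1 -> C' K2 -> sub K1 K2 \/ sub K2 K1.
  move=> K1 K2 [->|h1] [->|h2].
  - by left.
  - by left; case: (gC _ h2) => _ [_ [_ []]].
  - by right; case: (gC _ h1) => _ [_ [_ []]].
  - exact: ch.
have mem : forall a, (I a \/ exists J, C J /\ J a) -> exists K, C' K /\ K a.
  move=> a [h|[J [CJ hJ]]]; [exists I; split => //; by left|exists J; split => //; by right].
have back : forall K a, C' K -> K a -> I a \/ exists J, C J /\ J a.
  by move=> K a [->|h] ha; [left|right; exists K; split].
rewrite /good /is_ideal; split; [split; [|split]|split; [|split; [|split]]].
- by left; case: gI => [[]].
- move=> x y hx hy; case: (mem _ hx) => K1 [c1 h1]; case: (mem _ hy) => K2 [c2 h2].
  case: (ch' _ _ c1 c2) => hs.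
  + apply: (back K2) => //; case: (gC' _ c2) => [[_ [hs2 _]] _]; apply: hs2 => //; exact: hs.
  + apply: (back K1) => //; case: (gC' _ c1) => [[_ [hs2 _]] _]; apply: hs2 => //; exact: hs.
- move=> b x hx; case: (mem _ hx) => K [c h]; apply: (back K) => //.
  case: (gC' _ c) => [[_ [_ hm]] _]; exact: hm.
- move=> x k hx; case: (mem _ hx) => K [c h]; apply: (back K) => //.
  case: (gC' _ c) => _ [hr _]; exact: (hr x k).
- move=> i x hx; case: (mem _ hx) => K [c h]; apply: (back K) => //.
  case: (gC' _ c) => _ [_ [hd _]]; exact: (hd i x).
- by move=> a ha; left.
- move=> hx; case: (mem _ hx) => K [c h].
  by case: (gC' _ c) => _ [_ [_ [_ hn]]].
Qed.

Lemma rdc_mono (A : comPzRingType) n (D : 'I_n -> A -> A) (E F : A -> Prop) :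
  sub E F -> sub (rad_diff_closure D E) (rad_diff_closure D F).
Proof. move=> hEF x hx I hI hr hd hF; apply: (hx I hI hr hd) => y hy; apply: hF; exact: hEF. Qed.

Lemma prime_above (A : comPzRingType) n (D : 'I_n -> A -> A) (hD : is_diff_ring D)
  (I : A -> Prop) : is_ideal I -> is_radical I -> is_diff_closed D I -> ~ I 1 ->
  exists P, diff_prime D P /\ sub I P.
Proof.
move=> hI hr hd hn.
have gI : good D I I by split; [|split; [|split; [|split]]] => // a.
have [U [gU hmax]] := @zorn_gen A (good D I) I (good_union gI).
exists U; split; first exact: (maximal_prime hD gU hmax).
by case: gU => _ [_ [_ []]].
Qed.

Theorem lemma2p5 (A : comPzRingType) (n : nat) (D : 'I_n -> A -> A)
  (hD : is_diff_ring D) (eta : (A -> Prop) -> A * A)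
  (heta : in_Oprime_X D eta) :
  exists (m : nat) (b : 'I_m -> A),
    (forall i, exists a : A, forall p, diff_prime D p ->
        frac_eq p (b i * (eta p).1, (eta p).2) (a, 1)) /\
    (forall x : A, rad_diff_closure D (fun y => exists i, y = b i) x).
Proof.
pose S (s : A) := exists a : A, forall p, diff_prime D p ->
        frac_eq p (s * (eta p).1, (eta p).2) (a, 1).
pose J (x : A) := exists m (b : 'I_m -> A), (forall i, S (b i)) /\
   rad_diff_closure D (fun y => exists i, y = b i) x.
have J1 : J 1.
  apply: NNPP => hn.
  have hJI : is_ideal J.
    split; [|split].
    - exists 0%N, (fun i => 0); split; first by case.
      exact: (rdc_ideal D _).1.
    - move=> x y [m [b [hb hx]]] [k [c [hc hy]]].
      pose bc (i : 'I_(m + k)) := match split i with inl j => b j | inr j => c j end.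
      exists (m + k)%N, bc; split.
      + by move=> i; rewrite /bc; case: (split i).
      + apply: (rdc_ideal D _).2.1.
        * apply: (@rdc_mono A n D _ _ _ _ hx) => z [j ->]; exists (lshift k j).
          by rewrite /bc (unsplitK (inl j : 'I_m + 'I_k)).
        * apply: (@rdc_mono A n D _ _ _ _ hy) => z [j ->]; exists (rshift m j).
          by rewrite /bc (unsplitK (inr j : 'I_m + 'I_k)).
    - move=> a x [m [b [hb hx]]]; exists m, b; split => //.
      exact: (rdc_ideal D _).2.2.
  have hJr : is_radical J.
    move=> x k [m [b [hb hx]]]; exists m, b; split => //; exact: rdc_rad hx.
  have hJd : is_diff_closed D J.
    move=> i x [m [b [hb hx]]]; exists m, b; split => //; exact: rdc_diff hx.
  have [P [hP hJP]] := prime_above hD hJI hJr hJd hn.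
  case: heta => _ hreg.
  have [E [a [b [hoP hq]]]] := hreg P hP.
  have [y [Ey nPy]] : exists y, E y /\ ~ P y.
    apply: NNPP => h; apply: hoP => z Ez; apply: NNPP => nz; apply: h; by exists z.
  have Syb : S (y * b).
    exists (y * a) => q hq2; rewrite /frac_eq /=.
    have e : y * b * (eta q).1 * 1 - y * a * (eta q).2 = y * ((eta q).1 * b - a * (eta q).2).
      by rewrite mulr1 mulrBr -!mulrA [b * _]mulrC.
    rewrite e; have [[hqI _] _] := hq2.
    case: (classic (q y)) => hy.
    + exact: ideal_mulr.
    + have hoq : in_open E q by move=> h; apply: hy; exact: h.
      have [_ hf] := hq q hq2 hoq; rewrite /frac_eq /= in hf.
      case: hqI => _ [_ hm]; exact: hm.
  have JP : P (y * b).
    apply: hJP; exists 1%N, (fun _ => y * b); split => //.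
    apply: rdc_incl; by exists ord0.
  have [nPb _] := hq P hP hoP.
  have hpr2 : forall u v, P (u * v) -> P u \/ P v by move: hP; rewrite /diff_prime /is_prime_ideal; case=> [[_ [_ ?]] _].
  by case: (hpr2 _ _ JP) => h; [exact: nPy h|exact: nPb h].
case: J1 => m [b [hb h1]]; exists m, b; split => // x.
rewrite -(mulr1 x); exact: (rdc_ideal D _).2.2.
Qed.
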